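(* If $A\| B$ is a right D2 algebra extension, then the extension $\rho:A^{\mathrm{op}}\to\mathcal E=\mathrm{End}({}_BA)$ is left D2 and left balanced. Explicitly, if $\gamma_j\in S,u_j\in T$ is a right D2 quasibase for $A\| B$, then $T_j:=\sum_k\big(x\mapsto\gamma_j(xu_k^1)u_k^2\big)\otimes_{\rho(A)}\gamma_k\in(\mathcal E\otimes_{\rho(A)}\mathcal E)^{\rho(A)}$ and $\mathcal B_j\in\mathrm{End}({}_{\rho(A)}\mathcal E_{\rho(A)})$, $\mathcal B_j(f)=u_j^1f(u_j^2-)$, form a left D2 quasibase: $f\otimes_{\rho(A)}g=\sum_jT_j^1\otimes T_j^2\circ\mathcal B_j(f)\circ g$ for all $f,g\in\mathcal E$.
   Context: Algebras over a commutative ring $K$; an algebra extension $C\| D$ is a unit-preserving homomorphism $D\to C$. For $A\| B$: $S=\mathrm{End}({}_BA_B)$, $\mathcal E=\mathrm{End}({}_BA)$ (composition), $T=(A\otimes_BA)^B$ with Sweedler notation $t=t^1\otimes t^2$; $\rho(a)(x)=xa$, so $\rho:A^{\mathrm{op}}\to\mathcal E$ is an algebra homomorphism. $C\| D$ is right D2 if $C\otimes_DC$ is isomorphic as $C$-$D$-bimodule to a direct summand of some finite direct sum $C^n$, left D2 if the same holds as $D$-$C$-bimodules. Right D2 quasibase of $A\| B$: finitely many $\gamma_j\in S,u_j\in T$ with $a\otimes_Ba'=\sum_ja\gamma_j(a')u_j^1\otimes u_j^2$; left D2 quasibase of $C\| D$: finitely many $\beta_i\in\mathrm{End}({}_DC_D)$,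 $t_i\in(C\otimes_DC)^D$ with $c\otimes_Dc'=\sum_it_i^1\otimes t_i^2\beta_i(c)c'$. $C\| D$ is left balanced if every additive map $h:C\to C$ commuting with all elements of $\mathrm{End}({}_DC)$ is left multiplication by an element of the image of $D$. *)

(* Defs.v *)
From HB Require Import structures.
From mathcomp Require Import all_boot all_order all_algebra.
From mathcomp Require Import boolp.
Set Implicit Arguments.
Unset Strict Implicit.
Unset Printing Implicit Defensive.
Import Order.TTheory GRing.Theory.
Local Open Scope ring_scope.

(* Elements of the tensor product C (x)_D C are represented by formal sums    *)
(* s : seq (C * C)  (s = sum_i s_i.1 (x) s_i.2); two formal sums represent    *)
(* the same tensor iff every D-balanced biadditive map agrees on them         *)
(* (universal property of the tensor product).                               *)

Definition balanced (D C : pzRingType) (phi : D -> C) (M : zmodType)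
  (beta : C -> C -> M) : Prop :=
  [/\ forall x1 x2 y, beta (x1 + x2) y = beta x1 y + beta x2 y,
      forall x y1 y2, beta x (y1 + y2) = beta x y1 + beta x y2 &
      forall x d y, beta (x * phi d) y = beta x (phi d * y)].

Definition tsum (C : Type) (M : zmodType) (beta : C -> C -> M)
  (s : seq (C * C)) : M := \sum_(p <- s) beta p.1 p.2.

Definition teq (D C : pzRingType) (phi : D -> C) (s t : seq (C * C)) : Prop :=
  forall (M : zmodType) (beta : C -> C -> M), balanced phi beta ->
    tsum beta s = tsum beta t.

Definition tlmul (C : pzRingType) (c : C) (s : seq (C * C)) : seq (C * C) :=
  [seq (c * p.1, p.2) | p <- s].
Definition trmul (C : pzRingType) (c : C) (s : seq (C * C)) : seq (C * C) :=
  [seq (p.1, p.2 * c) | p <- s].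

Definition rvlmul (C : pzRingType) n (c : C) (u : 'rV[C]_n) : 'rV[C]_n :=
  map_mx (fun a => c * a) u.
Definition rvrmul (C : pzRingType) n (u : 'rV[C]_n) (c : C) : 'rV[C]_n :=
  map_mx (fun a => a * c) u.

(* Right D2: C (x)_D C is isomorphic, as C-D-bimodule, to a direct summand of
   some C^n, i.e. there is a split monomorphism of C-D-bimodules
   f : C (x)_D C -> C^n (given by the balanced map beta, f(x (x) y) = beta x y)
   with a C-D-bimodule retraction g : C^n -> C (x)_D C. *)
Definition right_D2 (D C : pzRingType) (phi : D -> C) : Prop :=
  exists n (beta : C -> C -> 'rV[C]_n) (g : 'rV[C]_n -> seq (C * C)),
  [/\ balanced phi beta,
      forall c x y, beta (c * x) y = rvlmul c (beta x y) &
      forall x y d, beta x (y * phi d) = rvrmul (beta x y) (phi d)] /\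
  [/\ forall u v, teq phi (g (u + v)) (g u ++ g v),
      forall c u, teq phi (g (rvlmul c u)) (tlmul c (g u)),
      forall d u, teq phi (g (rvrmul u (phi d))) (trmul (phi d) (g u)) &
      forall s, teq phi (g (tsum beta s)) s].

(* Left D2: the same with D-C-bimodules. *)
Definition left_D2 (D C : pzRingType) (phi : D -> C) : Prop :=
  exists n (beta : C -> C -> 'rV[C]_n) (g : 'rV[C]_n -> seq (C * C)),
  [/\ balanced phi beta,
      forall d x y, beta (phi d * x) y = rvlmul (phi d) (beta x y) &
      forall x y c, beta x (y * c) = rvrmul (beta x y) c] /\
  [/\ forall u v, teq phi (g (u + v)) (g u ++ g v),
      forall d u, teq phi (g (rvlmul (phi d) u)) (tlmul (phi d) (g u)),
      forall c u, teq phi (g (rvrmul u c)) (trmul c (g u)) &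
      forall s, teq phi (g (tsum beta s)) s].

Definition left_balanced (D C : pzRingType) (phi : D -> C) : Prop :=
  forall h : C -> C, (forall x y, h (x + y) = h x + h y) ->
    (forall k : C -> C, (forall x y, k (x + y) = k x + k y) ->
        (forall d x, k (phi d * x) = phi d * k x) ->
        forall x, h (k x) = k (h x)) ->
    exists d, forall x, h x = phi d * x.

Record Eend (A B : pzRingType) (iota : {rmorphism B -> A}) := MkE {
  ef :> A -> A;
  ef_add : forall x y, ef (x + y) = ef x + ef y;
  ef_lin : forall b x, ef (iota b * x) = iota b * ef x }.

Record Send (A B : pzRingType) (iota : {rmorphism B -> A}) := MkS {
  sf :> A -> A;
  sf_add : forall x y, sf (x + y) = sf x + sf y;
  sf_lin : forall b x b', sf (iota b * x * iota b') = iota b * sf x * iota b' }.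

Section EndRing.
Variables (A B : pzRingType) (iota : {rmorphism B -> A}).
Local Notation E := (Eend iota).

Lemma Eend_ext (f g : E) : (forall x, f x = g x) -> f = g.
Proof.
case: f g => f fa fl [g ga gl] /= /funext eq; subst g.
by rewrite (Prop_irrelevance fa ga) (Prop_irrelevance fl gl).
Qed.

HB.instance Definition _ := gen_eqMixin E.
HB.instance Definition _ := gen_choiceMixin E.

Definition E0 : E := @MkE _ _ iota (fun _ => 0)
  (fun _ _ => esym (addr0 0)) (fun b _ => esym (mulr0 (iota b))).

Lemma Eopp_add (f : E) x y : - f (x + y) = - f x + - f y.
Proof. by rewrite ef_add opprD. Qed.
Lemma Eopp_lin (f : E) b x : - f (iota b * x) = iota b * - f x.
Proof. by rewrite ef_lin mulrN. Qed.
Definition Eopp (f : E) : E := MkE (Eopp_add f) (Eopp_lin f).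

Lemma Eadd_add (f g : E) x y : f (x + y) + g (x + y) = (f x + g x) + (f y + g y).
Proof. by rewrite !ef_add addrACA. Qed.
Lemma Eadd_lin (f g : E) b x : f (iota b * x) + g (iota b * x) = iota b * (f x + g x).
Proof. by rewrite !ef_lin mulrDr. Qed.
Definition Eadd (f g : E) : E := MkE (Eadd_add f g) (Eadd_lin f g).

Lemma EaddA : associative Eadd.
Proof. by move=> f g h; apply: Eend_ext => x /=; rewrite addrA. Qed.
Lemma EaddC : commutative Eadd.
Proof. by move=> f g; apply: Eend_ext => x /=; rewrite addrC. Qed.
Lemma Eadd0 : left_id E0 Eadd.
Proof. by move=> f; apply: Eend_ext => x /=; rewrite add0r. Qed.
Lemma EaddN : left_inverse E0 Eopp Eadd.
Proof. by move=> f; apply: Eend_ext => x /=; rewrite addNr. Qed.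

HB.instance Definition _ := GRing.isZmodule.Build E EaddA EaddC Eadd0 EaddN.

Definition E1 : E := @MkE _ _ iota id (fun _ _ => erefl) (fun _ _ => erefl).

Lemma Emul_add (f g : E) x y : f (g (x + y)) = f (g x) + f (g y).
Proof. by rewrite !ef_add. Qed.
Lemma Emul_lin (f g : E) b x : f (g (iota b * x)) = iota b * f (g x).
Proof. by rewrite !ef_lin. Qed.
Definition Emul (f g : E) : E := MkE (Emul_add f g) (Emul_lin f g).

Lemma EmulA : associative Emul.
Proof. by move=> f g h; apply: Eend_ext. Qed.
Lemma Emul1 : left_id E1 Emul.
Proof. by move=> f; apply: Eend_ext. Qed.
Lemma Emulr1 : right_id E1 Emul.
Proof. by move=> f; apply: Eend_ext. Qed.
Lemma EmulDl : left_distributive Emul Eadd.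
Proof. by move=> f g h; apply: Eend_ext. Qed.
Lemma EmulDr : right_distributive Emul Eadd.
Proof. by move=> f g h; apply: Eend_ext => x /=; rewrite ef_add. Qed.

HB.instance Definition _ :=
  GRing.Zmodule_isPzRing.Build E EmulA Emul1 Emulr1 EmulDl EmulDr.

Lemma EmulE (f g : E) x : (f * g) x = f (g x).
Proof. by []. Qed.
Lemma EaddE (f g : E) x : (f + g) x = f x + g x.
Proof. by []. Qed.

(* rho : A^op -> E,  rho(a)(x) = x a *)
Lemma rho_add (a : A) x y : (x + y) * a = x * a + y * a.
Proof. exact: mulrDl. Qed.
Lemma rho_lin (a : A) b x : (iota b * x) * a = iota b * (x * a).
Proof. by rewrite mulrA. Qed.
Definition rho (a : A^c) : E := MkE (rho_add a) (rho_lin a).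

Lemma sf_linl (g : Send iota) b x : g (iota b * x) = iota b * g x.
Proof. by have := sf_lin g b x 1; rewrite rmorph1 !mulr1. Qed.

Definition SE (g : Send iota) : E := MkE (sf_add g) (sf_linl g).

(* the element  x |-> g(x a) c  of E, for g in S *)
Lemma gac_add (g : Send iota) (a c : A) x y :
  g ((x + y) * a) * c = g (x * a) * c + g (y * a) * c.
Proof. by rewrite mulrDl sf_add mulrDl. Qed.
Lemma gac_lin (g : Send iota) (a c : A) b x :
  g ((iota b * x) * a) * c = iota b * (g (x * a) * c).
Proof. by rewrite -mulrA sf_linl mulrA. Qed.
Definition gac (g : Send iota) (a c : A) : E := MkE (gac_add g a c) (gac_lin g a c).

End EndRing.

Definition inT (A B : pzRingType) (iota : {rmorphism B -> A}) (u : seq (A * A)) :=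
  forall b, teq iota (tlmul (iota b) u) (trmul (iota b) u).

Definition right_D2_quasibase (A B : pzRingType) (iota : {rmorphism B -> A}) m
  (gam : 'I_m -> Send iota) (u : 'I_m -> seq (A * A)) : Prop :=
  (forall j, inT iota (u j)) /\
  forall a a' : A, teq iota [:: (a, a')]
    [seq (a * gam j a' * p.1, p.2) | j <- enum 'I_m, p <- u j].

Definition Tj (A B : pzRingType) (iota : {rmorphism B -> A}) m
  (gam : 'I_m -> Send iota) (u : 'I_m -> seq (A * A)) (j : 'I_m)
  : seq (Eend iota * Eend iota) :=
  [seq (gac (gam j) p.1 p.2, SE (gam k)) | k <- enum 'I_m, p <- u k].

(* Main.v *)
Require Import Defs.
From HB Require Import structures.
From mathcomp Require Import all_boot all_order all_algebra.
From mathcomp Require Import boolp.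
Import GRing.Theory.
Local Open Scope ring_scope.

Lemma bal_sumr (D C : pzRingType) (phi : D -> C) (M : zmodType) (beta : C -> C -> M)
  (I : Type) (r : seq I) (P : pred I) (F : I -> C) x :
  balanced phi beta -> beta x (\sum_(i <- r | P i) F i) = \sum_(i <- r | P i) beta x (F i).
Proof.
case=> _ Hr _; apply: big_morph => [y z|]; first exact: Hr.
have h := Hr x 0 0; rewrite addr0 in h.
by apply: (addrI (beta x 0)); rewrite addr0 -h.
Qed.

Lemma bal_suml (D C : pzRingType) (phi : D -> C) (M : zmodType) (beta : C -> C -> M)
  (I : Type) (r : seq I) (P : pred I) (F : I -> C) y :
  balanced phi beta -> beta (\sum_(i <- r | P i) F i) y = \sum_(i <- r | P i) beta (F i) y.
Proof.
case=> Hl _ _; apply: (big_morph (fun x => beta x y)) => [x z|]; first exact: Hl.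
have h := Hl 0 0 y; rewrite addr0 in h.
by apply: (addrI (beta 0 y)); rewrite addr0 -h.
Qed.

Section QB.
Variables (A B : pzRingType) (iota : {rmorphism B -> A}).
Local Notation E := (Eend iota).

Lemma Esum_eval (I : Type) (r : seq I) (P : pred I) (F : I -> E) x :
  (\sum_(i <- r | P i) F i) x = \sum_(i <- r | P i) F i x.
Proof. exact: (big_morph (fun f : E => f x) (fun f g => erefl) erefl). Qed.

Variables (m : nat) (gam : 'I_m -> Send iota) (u : 'I_m -> seq (A * A)).
Hypothesis Hq : right_D2_quasibase gam u.

Lemma qb_apply (M : zmodType) (beta : A -> A -> M) a a' : balanced iota beta ->
  beta a a' = \sum_(j <- enum 'I_m) \sum_(p <- u j) beta (a * gam j a' * p.1) p.2.
Proof.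
by move=> Hb; have := Hq.2 a a' M beta Hb; rewrite /tsum big_seq1 big_allpairs_dep.
Qed.

Lemma Q1 j y z :
  \sum_(k <- enum 'I_m) \sum_(p <- u k) gam j (y * gam k z * p.1) * p.2 = gam j y * z.
Proof.
have := @qb_apply _ (fun s t => gam j s * t) y z; move=> -> //; split.
- by move=> *; rewrite sf_add mulrDl.
- by move=> *; rewrite mulrDr.
- move=> x d t; have := sf_lin (gam j) 1 x d; rewrite rmorph1 !mul1r => ->.
  by rewrite mulrA.
Qed.

Lemma Q2 (f : E) y v :
  \sum_(j <- enum 'I_m) \sum_(q <- u j) gam j y * q.1 * f (q.2 * v) = f (y * v).
Proof.
have := @qb_apply _ (fun s t => s * f (t * v)) 1 y.
rewrite mul1r => ->; last split.
  by apply: eq_bigr => j _; apply: eq_bigr => q _; rewrite mul1r.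
- by move=> *; rewrite mulrDl.
- by move=> *; rewrite mulrDl ef_add mulrDr.
- by move=> x d t /=; rewrite -mulrA -(mulrA (iota d)) ef_lin.
Qed.

Lemma Edecomp (h : E) :
  h = \sum_(l <- enum 'I_m) \sum_(r <- u l) rho iota (r.1 * h r.2 : A) * SE (gam l).
Proof.
apply: Eend_ext => x; rewrite Esum_eval.
rewrite -[x in h x]mulr1 -(Q2 h x 1).
apply: eq_bigr => l _; rewrite Esum_eval; apply: eq_bigr => r _.
by rewrite EmulE /= mulr1 mulrA.
Qed.


Lemma NF (s t : seq (E * E)) :
  (forall y w : A, \sum_(P <- s) P.1 (y * P.2 w) = \sum_(P <- t) P.1 (y * P.2 w)) ->
  teq (@rho A B iota) s t.
Proof.
move=> H M beta Hb.
have key : forall s0 : seq (E * E), tsum beta s0 =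
  \sum_(l <- enum 'I_m) \sum_(r <- u l)
     beta (\sum_(P <- s0) P.1 * rho iota (r.1 * P.2 r.2 : A)) (SE (gam l)).
  move=> s0; rewrite /tsum.
  transitivity (\sum_(P <- s0) \sum_(l <- enum 'I_m) \sum_(r <- u l)
     beta (P.1 * rho iota (r.1 * P.2 r.2 : A)) (SE (gam l))).
    apply: eq_bigr => P _; rewrite {1}(Edecomp P.2) (@bal_sumr _ _ _ _ _ _ _ _ _ _ Hb).
    apply: eq_bigr => l _; rewrite (@bal_sumr _ _ _ _ _ _ _ _ _ _ Hb); apply: eq_bigr => r _.
    by case: Hb => _ _ ->.
  rewrite exchange_big /=; apply: eq_bigr => l _.
  rewrite exchange_big /=; apply: eq_bigr => r _.
  by rewrite (@bal_suml _ _ _ _ _ _ _ _ _ _ Hb).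
rewrite !key; apply: eq_bigr => l _; apply: eq_bigr => r _; congr (beta _ _).
apply: Eend_ext => x; rewrite !Esum_eval.
transitivity (\sum_(P <- s) P.1 (x * r.1 * P.2 r.2)).
  by apply: eq_bigr => P _; rewrite EmulE /= mulrA.
rewrite H; apply: eq_bigr => P _; by rewrite EmulE /= mulrA.
Qed.

Lemma Tj_sum (M : zmodType) (F : E * E -> M) j :
  \sum_(P <- Tj gam u j) F P =
  \sum_(k <- enum 'I_m) \sum_(p <- u k) F (gac (gam j) p.1 p.2, SE (gam k)).
Proof. by rewrite /Tj big_allpairs_dep. Qed.

Lemma Tj_central j (a : A^c) :
  teq (@rho A B iota) (tlmul (rho iota a) (Tj gam u j)) (trmul (rho iota a) (Tj gam u j)).
Proof.
apply: NF => y w; rewrite /tlmul /trmul !big_map !Tj_sum.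
transitivity ((\sum_(k <- enum 'I_m) \sum_(p <- u k) gam j (y * gam k w * p.1) * p.2) * a).
  rewrite mulr_suml; apply: eq_bigr => k _; rewrite mulr_suml; apply: eq_bigr => p _.
  by [].
rewrite Q1 -mulrA -Q1; apply: eq_bigr => k _; apply: eq_bigr => p _.
by [].
Qed.

Lemma Bq_add j (f : E) x y :
  \sum_(p <- u j) p.1 * f (p.2 * (x + y)) =
  \sum_(p <- u j) p.1 * f (p.2 * x) + \sum_(p <- u j) p.1 * f (p.2 * y).
Proof. by rewrite -big_split; apply: eq_bigr => p _; rewrite mulrDr ef_add mulrDr. Qed.

Lemma Bq_lin j (f : E) b x :
  \sum_(p <- u j) p.1 * f (p.2 * (iota b * x)) =
  iota b * \sum_(p <- u j) p.1 * f (p.2 * x).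
Proof.
have := Hq.1 j b A (fun s t => s * f (t * x)).
rewrite /tsum /tlmul /trmul !big_map /= mulr_sumr => H.
transitivity (\sum_(p <- u j) iota b * p.1 * f (p.2 * x)); last first.
  by apply: eq_bigr => p _; rewrite mulrA.
rewrite H.
  by apply: eq_bigr => p _; rewrite mulrA.
split.
- by move=> *; rewrite mulrDl.
- by move=> *; rewrite mulrDl ef_add mulrDr.
- by move=> x' d t /=; rewrite -mulrA -(mulrA (iota d)) ef_lin.
Qed.

Definition Bq j (f : E) : E := MkE (Bq_add j f) (Bq_lin j f).


Lemma BqE j f x : Bq j f x = \sum_(p <- u j) p.1 * f (p.2 * x).
Proof. by []. Qed.

Lemma BqD j (f g : E) : Bq j (f + g) = Bq j f + Bq j g.
Proof.
apply: Eend_ext => x; rewrite EaddE !BqE -big_split.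
by apply: eq_bigr => p _; rewrite EaddE mulrDr.
Qed.

Lemma BqM j (a a' : A^c) f :
  Bq j (rho iota a * f * rho iota a') = rho iota a * Bq j f * rho iota a'.
Proof.
apply: Eend_ext => x; rewrite !EmulE !BqE /= mulr_suml.
by apply: eq_bigr => p _ /=; rewrite !mulrA.
Qed.

Lemma Tj_qb (f g : E) : teq (@rho A B iota) [:: (f, g)]
   [seq (p.1, p.2 * Bq j f * g) | j <- enum 'I_m, p <- Tj gam u j].
Proof.
apply: NF => y w; rewrite big_seq1 big_allpairs_dep /=.
rewrite -(Q2 f y (g w)); apply eq_bigr => j _.
symmetry; rewrite Tj_sum /= Q1 mulr_sumr; apply eq_bigr => q _; by rewrite mulrA.
Qed.


Lemma rho1 : rho iota (1 : A^c) = 1.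
Proof. by apply: Eend_ext => x /=; rewrite mulr1. Qed.

Definition lbeta (f g : E) : 'rV[E]_m := \row_(j < m) (Bq j f * g).
Definition lg (v : 'rV[E]_m) : seq (E * E) :=
  [seq (p.1, p.2 * v ord0 j) | j <- enum 'I_m, p <- Tj gam u j].

Lemma lg_sum (M : zmodType) (beta : E -> E -> M) v :
  tsum beta (lg v) = \sum_(j <- enum 'I_m) \sum_(P <- Tj gam u j) beta P.1 (P.2 * v ord0 j).
Proof. by rewrite /tsum /lg big_allpairs_dep. Qed.

Lemma lg_sumF (M : zmodType) (F : E * E -> M) v :
  \sum_(P <- lg v) F P = \sum_(j <- enum 'I_m) \sum_(P <- Tj gam u j) F (P.1, P.2 * v ord0 j).
Proof. by rewrite /lg big_allpairs_dep. Qed.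

Lemma tsum_tl (M : zmodType) (beta : E -> E -> M) c s :
  tsum beta (tlmul c s) = \sum_(P <- s) beta (c * P.1) P.2.
Proof. by rewrite /tsum big_map. Qed.

Lemma tsum_tr (M : zmodType) (beta : E -> E -> M) c s :
  tsum beta (trmul c s) = \sum_(P <- s) beta P.1 (P.2 * c).
Proof. by rewrite /tsum big_map. Qed.

Lemma qb_left_D2 : left_D2 (@rho A B iota).
Proof.
exists m, lbeta, lg; split; first split; first split.
- by move=> x1 x2 y; apply/matrixP => i j; rewrite !mxE BqD mulrDl.
- by move=> x y1 y2; apply/matrixP => i j; rewrite !mxE mulrDr.
- move=> x d y; apply/matrixP => i j; rewrite !mxE.
  by have := BqM j 1 d x; rewrite rho1 !mul1r => ->; rewrite mulrA.
- move=> d x y; apply/matrixP => i j; rewrite !mxE.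
  by have := BqM j d 1 x; rewrite rho1 !mulr1 => ->; rewrite mulrA.
- by move=> x y c; apply/matrixP => i j; rewrite !mxE mulrA.
split.
- move=> v w M beta Hb; rewrite lg_sum.
  have -> : tsum beta (lg v ++ lg w) = tsum beta (lg v) + tsum beta (lg w).
    by rewrite /tsum big_cat.
  rewrite !lg_sum -big_split.
  apply eq_bigr => j _; rewrite -big_split; apply eq_bigr => P _.
  by rewrite mxE mulrDr; case: Hb => _ -> _.
- move=> d v M beta Hb; rewrite lg_sum tsum_tl lg_sumF /=.
  apply eq_bigr => j _.
  have Hb' : balanced (@rho A B iota) (fun x y => beta x (y * v ord0 j)).
    case: Hb => H1 H2 H3; split.
    + by move=> *; apply: H1.
    + by move=> *; rewrite mulrDl H2.
    + by move=> *; rewrite H3 mulrA.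
  have := Tj_central j d _ _ Hb'; rewrite tsum_tl tsum_tr => ->.
  by apply eq_bigr => P _; rewrite mxE mulrA.
- move=> c v M beta Hb; rewrite lg_sum tsum_tr lg_sumF /=.
  by apply eq_bigr => j _; apply eq_bigr => P _; rewrite mxE mulrA.
- move=> s M beta Hb; rewrite lg_sum.
  transitivity (\sum_(j <- enum 'I_m) \sum_(P <- Tj gam u j) \sum_(Q <- s)
      beta P.1 (P.2 * Bq j Q.1 * Q.2)).
    apply eq_bigr => j _; apply eq_bigr => P _.
    rewrite /tsum summxE mulr_sumr (@bal_sumr _ _ _ _ _ _ _ _ _ _ Hb).
    by apply eq_bigr => Q _; rewrite mxE mulrA.
  rewrite /tsum.
  transitivity (\sum_(j <- enum 'I_m) \sum_(Q <- s) \sum_(P <- Tj gam u j)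
      beta P.1 (P.2 * Bq j Q.1 * Q.2)).
    by apply eq_bigr => j _; rewrite exchange_big.
  rewrite exchange_big /=.
  apply eq_bigr => Q _.
  have := Tj_qb Q.1 Q.2 _ _ Hb; rewrite /tsum big_seq1 big_allpairs_dep => ->.
  by [].
Qed.

End QB.

Lemma lbal (A B : pzRingType) (iota : {rmorphism B -> A}) : left_balanced (@rho A B iota).
Proof.
move=> h hadd hk.
have hR : forall f e : Eend iota, h (f * e) = h f * e.
  move=> f e; apply: (hk (fun f => f * e)) => [x y|d x]; first exact: mulrDl.
  by rewrite mulrA.
have kadd : forall x y : Eend iota,
    rho iota ((x + y) 1 : A^c) = rho iota (x 1 : A^c) + rho iota (y 1 : A^c).
  by move=> x y; apply: Eend_ext => z /=; rewrite mulrDr.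
have klin : forall (d : A^c) (x : Eend iota),
    rho iota ((rho iota d * x) 1 : A^c) = rho iota d * rho iota (x 1 : A^c).
  by move=> d x; apply: Eend_ext => z /=; rewrite mulrA.
have := hk (fun f : Eend iota => rho iota (f 1 : A^c)) kadd klin 1.
have -> : rho iota ((1 : Eend iota) 1 : A^c) = 1.
  by apply: Eend_ext => z /=; rewrite mulr1.
move=> H1; exists (h 1 1 : A^c) => x.
by rewrite -[x in h x]mul1r hR {1}H1.
Qed.

Lemma delta_decomp (A : pzRingType) n (v : 'rV[A]_n) (a : A) :
  rvlmul a v = \sum_(j <- enum 'I_n) rvlmul (a * v ord0 j) (delta_mx ord0 j).
Proof.
apply/matrixP => i k; rewrite (ord1 i) summxE mxE.
rewrite (bigD1_seq k) ?mem_enum ?enum_uniq //= big1_seq.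
  by rewrite !mxE !eqxx /= mulr1 addr0.
move=> j /andP [nejk _]; rewrite !mxE eqxx /=.
by rewrite eq_sym (negbTE nejk) mulr0.
Qed.

Lemma rD2_qb (A B : pzRingType) (iota : {rmorphism B -> A}) : right_D2 iota ->
  exists m (gam : 'I_m -> Send iota) (u : 'I_m -> seq (A * A)), right_D2_quasibase gam u.
Proof.
case=> n [beta [g [[Hbal Hl Hr] [Hg1 Hg2 Hg3 Hg4]]]].
have Hbal' := Hbal; case: Hbal' => Ha1 Ha2 Ha3.
have gadd : forall j x y, beta 1 (x + y) ord0 j = beta 1 x ord0 j + beta 1 y ord0 j.
  by move=> j x y; rewrite Ha2 mxE.
have glin : forall j b x b', beta 1 (iota b * x * iota b') ord0 j =
    iota b * beta 1 x ord0 j * iota b'.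
  move=> j b x b'; rewrite Hr -Ha3 mul1r -[iota b]mulr1 Hl.
  by rewrite !mxE mulr1.
pose gam j := MkS (gadd j) (glin j).
exists n, gam, (fun j => g (delta_mx ord0 j)); split.
  move=> j b M beta' Hb.
  rewrite -(Hg2 _ _ _ _ Hb) -(Hg3 _ _ _ _ Hb); congr (tsum _ (g _)).
  apply/matrixP => i k; rewrite !mxE.
  by case: (_ && _); rewrite /= ?mulr1 ?mul1r ?mulr0 ?mul0r.
move=> a a' M beta' Hb.
have gsum : forall (r : seq 'I_n) (w : 'I_n -> 'rV[A]_n),
    tsum beta' (g (\sum_(j <- r) w j)) = \sum_(j <- r) tsum beta' (g (w j)).
  move=> r w; elim: r => [|j r IH].
    rewrite !big_nil.
    have := Hg1 0 0 M beta' Hb; rewrite addr0 /tsum big_cat /= => h.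
    by apply: (addrI (\sum_(p <- g 0) beta' p.1 p.2)); rewrite addr0 -h.
  have tcat : forall s t, tsum beta' (s ++ t) = tsum beta' s + tsum beta' t.
    by move=> s t; rewrite /tsum big_cat.
  by rewrite !big_cons (Hg1 _ _ _ _ Hb) tcat IH.
rewrite -(Hg4 _ _ _ Hb) /tsum big_seq1 -[a in beta a a']mulr1 Hl delta_decomp.
rewrite -/(tsum beta' _) gsum big_allpairs_dep; apply eq_bigr => j _.
by rewrite (Hg2 _ _ _ _ Hb) /tsum big_map.
Qed.

Theorem corollary5p2 (A B : pzRingType) (iota : {rmorphism B -> A}) :
  (right_D2 iota ->
     left_D2 (@rho A B iota) /\ left_balanced (@rho A B iota)) /\
  (forall m (gam : 'I_m -> Send iota) (u : 'I_m -> seq (A * A)),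
     right_D2_quasibase gam u ->
     [/\ (* T_j lies in (E (x)_{rho(A)} E)^{rho(A)} *)
         forall j (a : A^c), teq (@rho A B iota)
            (tlmul (rho iota a) (Tj gam u j)) (trmul (rho iota a) (Tj gam u j)) &
         (* B_j(f) = u_j^1 f(u_j^2 -) defines elements B_j of End(rho(A) E rho(A))
            forming, with the T_j, a left D2 quasibase *)
         exists Bq : 'I_m -> Eend iota -> Eend iota,
         [/\ forall j f x, Bq j f x = \sum_(p <- u j) p.1 * f (p.2 * x),
             forall j f g, Bq j (f + g) = Bq j f + Bq j g,
             forall j (a a' : A^c) f,
               Bq j (rho iota a * f * rho iota a') = rho iota a * Bq j f * rho iota a' &
             forall f g : Eend iota, teq (@rho A B iota) [:: (f, g)]
               [seq (p.1, p.2 * Bq j f * g) | j <- enum 'I_m, p <- Tj gam u j]]]).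
Proof.
split.
  move=> HD2; split; last exact: lbal.
  case: (@rD2_qb A B iota HD2) => m [gam [u Hq]].
  exact: qb_left_D2 Hq.
move=> m gam u Hq; split; first exact: Tj_central Hq.
exists (@Bq A B iota m gam u Hq); split.
- exact: BqE.
- exact: BqD.
- exact: BqM.
- exact: Tj_qb.
Qed.
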